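(* Let $(\rho,\sigma)\in\mathfrak V$ with $\sigma\le0$ and $P,Q\in W^{(l)}\setminus\{0\}$. If $\ell_{\rho,\sigma}(P)=\sum_{i=0}^{\alpha}\lambda_ix^{\frac rl-\frac{i\sigma}\rho}y^{s+i}$ and $\ell_{\rho,\sigma}(Q)=\sum_{j=0}^{\beta}\mu_jx^{\frac ul-\frac{j\sigma}\rho}y^{v+j}$ with $\lambda_0,\lambda_\alpha,\mu_0,\mu_\beta\neq0$, then $$[P,Q]_{\rho,\sigma}=\sum_{i=0}^{\alpha}\sum_{j=0}^{\beta}\lambda_i\mu_jc_{ij}\,x^{\frac{r+u}{l}-\frac{(i+j)\sigma}{\rho}-1}y^{s+v+i+j-1},$$ where $c_{ij}=\bigl(\frac ul-\frac{j\sigma}\rho,\,v+j\bigr)\times\bigl(\frac rl-\frac{i\sigma}\rho,\,s+i\bigr)$ and $(a_1,a_2)\times(b_1,b_2):=a_1b_2-a_2b_1$.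
   Context: $K$ is a field of characteristic zero, $l\in\mathbb{N}$. $W^{(l)}$ is the associative $K$-algebra with $K$-basis $\{X^{i/l}Y^j:i\in\mathbb{Z},j\in\mathbb{N}_0\}$, powers of $X$ multiplying as Laurent monomials and $[Y,X^\alpha]=\alpha X^{\alpha-1}$ for $\alpha\in\frac1l\mathbb{Z}$. $L^{(l)}=K[x^{\pm1/l},y]$, $\Psi^{(l)}(X^{i/l}Y^j)=x^{i/l}y^j$ ($K$-linear); supports are sets of exponents with nonzero coefficient. $\mathfrak V=\{(\rho,\sigma)\in\mathbb{Z}^2:\gcd(\rho,\sigma)=1,\rho+\sigma>0\}$. For $P\ne0$, $v_{\rho,\sigma}(P)=\max\{\rho a+\sigma b:(a,b)\in\mathrm{Supp}(P)\}$, $\ell_{\rho,\sigma}(P)\in L^{(l)}$ = sum of terms of $\Psi^{(l)}(P)$ attaining it. $[P,Q]_{\rho,\sigma}:=0$ if $[P,Q]=0$ or $v_{\rho,\sigma}([P,Q])<v_{\rho,\sigma}(P)+v_{\rho,\sigma}(Q)-(\rho+\sigma)$, and $:=\ell_{\rho,\sigma}([P,Q])$ otherwise. *)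

(* Defs.v *)
From HB Require Import structures.
From mathcomp Require Import all_boot all_order all_algebra.
Set Implicit Arguments. Unset Strict Implicit. Unset Printing Implicit Defensive.
Import Order.TTheory GRing.Theory Num.Theory.
Local Open Scope ring_scope.

(* An element of W^(l) is given by a finite formal sum of terms
   c * X^(i/l) Y^j, stored as a list of (c, (i, j)) with i : int, j : nat.
   Two lists represent the same element iff they have the same coefficient
   function [Wcoef]; all notions below only depend on [Wcoef]. *)
Section W.
Variable K : fieldType.
Definition Welt := seq (K * (int * nat)).

Definition Wcoef (P : Welt) (i : int) (j : nat) : K :=
  \sum_(m <- P | m.2 == (i, j)) m.1.

Definition Wcoefr (l : nat) (P : Welt) (a : rat) (b : nat) : K :=
  \sum_(m <- P | (m.2.2 == b) && ((m.2.1)%:~R / l%:R == a)) m.1.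

Definition Wnz (P : Welt) : bool := has (fun m => Wcoef P m.2.1 m.2.2 != 0) P.

Definition ffall (b : rat) (k : nat) : rat := \prod_(t < k) (b - t%:R).

(* (c1 X^(i1/l) Y^j1) (c2 X^(i2/l) Y^j2)
   = sum_k C(j1,k) (i2/l)_k c1 c2 X^((i1+i2)/l - k) Y^(j1+j2-k),
   using Y X^b = X^b Y + b X^(b-1). *)
Definition monmul (l : nat) (m1 m2 : K * (int * nat)) : Welt :=
  [seq (m1.1 * m2.1 * ('C(m1.2.2, k))%:R
          * ratr (ffall ((m2.2.1)%:~R / l%:R) k),
        (m1.2.1 + m2.2.1 - (k * l)%:Z, (m1.2.2 + m2.2.2 - k)%N))
  | k <- iota 0 m1.2.2.+1].

Definition Wmul (l : nat) (P Q : Welt) : Welt :=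
  flatten [seq monmul l m1 m2 | m1 <- P, m2 <- Q].

Definition Wopp (P : Welt) : Welt := [seq (- m.1, m.2) | m <- P].

Definition Wcomm (l : nat) (P Q : Welt) : Welt := Wmul l P Q ++ Wopp (Wmul l Q P).

Definition wt (l : nat) (rho sigma : int) (i : int) (j : nat) : rat :=
  rho%:~R * ((i%:~R) / l%:R) + sigma%:~R * j%:R.

(* v_{rho,sigma}(P): maximum of the weights over the support (meaningful for P <> 0) *)
Definition vW (l : nat) (rho sigma : int) (P : Welt) : rat :=
  let s := [seq wt l rho sigma m.2.1 m.2.2 | m <- P & Wcoef P m.2.1 m.2.2 != 0] in
  match s with [::] => 0 | w :: s' => foldr Num.max w s' end.

(* ell_{rho,sigma}(P) in L^(l), as its coefficient function
   (x^a y^b, a rational, b natural) *)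
Definition ellW (l : nat) (rho sigma : int) (P : Welt) (a : rat) (b : nat) : K :=
  if rho%:~R * a + sigma%:~R * b%:R == vW l rho sigma P then Wcoefr l P a b else 0.

Definition Wbr (l : nat) (rho sigma : int) (P Q : Welt) (a : rat) (b : nat) : K :=
  let C := Wcomm l P Q in
  if Wnz C && (vW l rho sigma P + vW l rho sigma Q - (rho + sigma)%:~R
                 <= vW l rho sigma C)
  then ellW l rho sigma C a b else 0.

Definition monoL (a0 : rat) (b0 : int) (a : rat) (b : nat) : K :=
  if (a == a0) && (b%:Z == b0) then 1 else 0.

End W.

Definition cross (a b : rat * rat) : rat := a.1 * b.2 - a.2 * b.1.

(* Main.v *)
Require Import Defs.
From HB Require Import structures.
From mathcomp Require Import all_boot all_order all_algebra.
From mathcomp Require Import ring lra.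
Import Order.TTheory GRing.Theory Num.Theory.
Local Open Scope ring_scope.

Section Ratr.
Variable K : fieldType.
Hypothesis hK : [pchar K] =i pred0.

Lemma nz_denK (x : rat) : (denq x)%:~R != 0 :> K.
Proof.
have := denq_gt0 x; case: (denq x) => // n hn.
change ((n%:R : K) != 0); rewrite ((pcharf0P _).1 hK n).
by case: n hn.
Qed.

Lemma ratrKB (x y : rat) : ratr (x - y) = ratr x - ratr y :> K.
Proof.
have injZtoQ: @injective rat int intr by apply: intr_inj.
have nz_den := nz_denK.
apply: (canLR (mulfK (nz_den _))); apply: (mulIf (nz_den x)).
rewrite mulrAC mulrBl divfK ?nz_den // mulrAC -!rmorphM.
apply: (mulIf (nz_den y)); rewrite mulrAC mulrBl divfK ?nz_den //.
rewrite -!(rmorphM, rmorphB); congr _%:~R; apply: injZtoQ.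
rewrite !(rmorphM, rmorphB) /= [_ - _]lock /= -lock !numqE.
by rewrite (mulrAC y) -!mulrBl -mulrA mulrAC !mulrA.
Qed.

Lemma ratrKM (x y : rat) : ratr (x * y) = ratr x * ratr y :> K.
Proof.
have injZtoQ: @injective rat int intr by apply: intr_inj.
have nz_den := nz_denK.
rewrite /ratr mulrC mulrAC; apply: canLR (mulKf (nz_den _)) _; rewrite !mulrA.
do 2!apply: canRL (mulfK (nz_den _)) _; rewrite -!rmorphM; congr _%:~R.
apply: injZtoQ; rewrite !rmorphM [x * y]lock /= !numqE -lock.
by rewrite -!mulrA mulrA mulrCA -!mulrA (mulrCA y).
Qed.
End Ratr.

Lemma sum_pred1_seq (R : nmodType) (I : eqType) (r : seq I) (j : I) (F : I -> R) :
  uniq r -> j \in r -> \sum_(i <- r | i == j) F i = F j.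
Proof.
move=> ur jr; rewrite big_mkcond (bigD1_seq j) //= eqxx big1 ?addr0 //.
by move=> i /negbTE ->.
Qed.


Lemma foldr_max_ub (w : rat) (s : seq rat) x : x \in w :: s -> x <= foldr Num.max w s.
Proof.
elim: s x => [|y s IH] x /=; first by rewrite inE => /eqP ->.
rewrite !inE => /orP [/eqP ->|/orP [/eqP ->|hx]].
- by rewrite le_max IH ?orbT // mem_head.
- by rewrite le_max lexx.
- by rewrite le_max IH ?orbT // inE hx orbT.
Qed.

Lemma foldr_max_mem (w : rat) (s : seq rat) : foldr Num.max w s \in w :: s.
Proof.
elim: s => [|y s IH] /=; first by rewrite mem_head.
case: (leP y (foldr Num.max w s)) => _.
  by move: IH; rewrite !inE => /orP [->|->]; rewrite ?orbT.
by rewrite !inE eqxx orbT.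
Qed.

Lemma sum_nz_has (R : nmodType) (I : Type) (r : seq I) (Pr : pred I) (F : I -> R) :
  \sum_(i <- r | Pr i) F i != 0 -> has Pr r.
Proof.
apply: contraNT; elim: r => [|x r IH] /=; first by rewrite big_nil.
by rewrite big_cons; case: (Pr x) => //= /IH.
Qed.

Section Main.
Variable K : fieldType.
Variable l : nat.

Definition KS (P : Welt K) : seq (int * nat) := undup [seq m.2 | m <- P].

Lemma regroup (P : Welt K) (g : int * nat -> K) :
  \sum_(m <- P) m.1 * g m.2 = \sum_(k <- KS P) Wcoef P k.1 k.2 * g k.
Proof.
rewrite /Wcoef.
under [RHS]eq_bigr => k _ do rewrite -surjective_pairing big_distrl big_mkcond /=.
rewrite exchange_big /=; apply: eq_big_seq => m mP.
rewrite -big_mkcond /=.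
under eq_bigl => k do rewrite eq_sym.
by rewrite sum_pred1_seq ?undup_uniq // mem_undup; apply: map_f.
Qed.

Definition ind (a : rat) (b : nat) (k : int * nat) : K :=
  if (k.2 == b) && (k.1%:~R / l%:R == a) then 1 else 0.

Lemma Wcoefr_sum (P : Welt K) a b :
  Wcoefr l P a b = \sum_(m <- P) m.1 * ind a b m.2.
Proof.
rewrite /Wcoefr big_mkcond; apply: eq_bigr => m _.
by rewrite /ind; case: ifP; rewrite ?mulr1 ?mulr0.
Qed.

Lemma Wcoefr_KS (P : Welt K) a b :
  Wcoefr l P a b = \sum_(k <- KS P) Wcoef P k.1 k.2 * ind a b k.
Proof. by rewrite Wcoefr_sum regroup. Qed.

Lemma Wcoefr_comm (P Q : Welt K) a b :
  Wcoefr l (Wcomm l P Q) a b = Wcoefr l (Wmul l P Q) a b - Wcoefr l (Wmul l Q P) a b.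
Proof.
rewrite !Wcoefr_sum /Wcomm big_cat /= /Wopp big_map /=.
by rewrite -sumrN; congr (_ + _); apply: eq_bigr => m _; rewrite mulNr.
Qed.

Definition Gm (k1 k2 : int * nat) (a : rat) (b : nat) : K :=
  \sum_(k <- iota 0 k1.2.+1)
    (if ((k1.2 + k2.2 - k)%N == b) && ((k1.1 + k2.1 - (k * l)%N%:Z)%:~R / l%:R == a)
     then ('C(k1.2, k))%:R * ratr (ffall (k2.1%:~R / l%:R) k) else 0).

Lemma Wcoefr_monmul (m1 m2 : K * (int * nat)) a b :
  Wcoefr l (monmul l m1 m2) a b = m1.1 * m2.1 * Gm m1.2 m2.2 a b.
Proof.
rewrite Wcoefr_sum /monmul big_map /Gm big_distrr /=; apply: eq_bigr => k _.
rewrite /ind /=; case: ifP; rewrite ?mulr1 ?mulr0 //.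
by rewrite !mulrA.
Qed.

Lemma Wcoefr_Wmul (P Q : Welt K) a b :
  Wcoefr l (Wmul l P Q) a b =
  \sum_(k1 <- KS P) Wcoef P k1.1 k1.2 *
     \sum_(k2 <- KS Q) Wcoef Q k2.1 k2.2 * Gm k1 k2 a b.
Proof.
rewrite /Wmul Wcoefr_sum big_flatten /= big_allpairs_dep /=.
rewrite -(regroup P (fun k1 => \sum_(k2 <- KS Q) Wcoef Q k2.1 k2.2 * Gm k1 k2 a b)).
apply: eq_bigr => m1 _; rewrite -regroup big_distrr /=; apply: eq_bigr => m2 _.
by rewrite -Wcoefr_sum Wcoefr_monmul mulrA.
Qed.


Variables rho sigma : int.
Hypothesis hl : (0 < l)%N.

Definition W (a : rat) (b : nat) : rat := rho%:~R * a + sigma%:~R * b%:R.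
Definition pt (k : int * nat) : rat * nat := (k.1%:~R / l%:R, k.2).
Definition wk (k : int * nat) : rat := wt l rho sigma k.1 k.2.

Lemma l_nz : (l%:R : rat) != 0.
Proof. by rewrite pnatr_eq0 -lt0n. Qed.

Lemma W_kterm (k1 k2 : int * nat) (k : nat) : (k <= k1.2 + k2.2)%N ->
  W ((k1.1 + k2.1 - (k * l)%N%:Z)%:~R / l%:R) (k1.2 + k2.2 - k)%N =
  wk k1 + wk k2 - k%:R * (rho + sigma)%:~R.
Proof.
move=> hk; rewrite /W /wk /wt natrB // !intrB !intrD natrD.
have -> : ((k * l)%N%:Z)%:~R = (k * l)%:R :> rat by [].
rewrite natrM; have := l_nz; move: (l%:R : rat) => L hL.
by field.
Qed.

Definition G0 (k1 k2 : int * nat) (a : rat) (b : nat) : K :=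
  if ((k1.2 + k2.2)%N == b) && ((k1.1 + k2.1)%:~R / l%:R == a) then 1 else 0.

Definition Hp (p1 p2 : rat * nat) (a : rat) (b : nat) : K :=
  if (p1.1 + p2.1 - 1 == a) && ((p1.2 + p2.2)%N%:Z - 1 == b%:Z)
  then p1.2%:R * ratr p2.1 else 0.

Lemma Gm_split k1 k2 a b : 0 < rho + sigma ->
  wk k1 + wk k2 - (rho + sigma)%:~R <= W a b ->
  Gm k1 k2 a b = G0 k1 k2 a b + Hp (pt k1) (pt k2) a b.
Proof.
move=> hpos hw; rewrite /Gm /= big_cons.
congr (_ + _).
  rewrite /G0 subn0 mul0n subr0 bin0 /ffall big_ord0.
  by case: ifP => //; rewrite (ratr_nat _ 1) mulr1.
case: k1 hw => i1 [|n] hw /=.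
  by rewrite big_nil /Hp; case: ifP => //; rewrite mul0r.
rewrite big_cons big1_seq ?addr0.
  rewrite /Hp /= bin1 /ffall big_ord1 subr0 mul1n.
  have -> : (i1 + k2.1 - l%:Z)%:~R / l%:R = i1%:~R / l%:R + k2.1%:~R / l%:R - 1 :> rat.
    rewrite intrB intrD; have -> : (l%:Z)%:~R = l%:R :> rat by [].
    have := l_nz; move: (l%:R : rat) => L hL; by field.
  have -> : ((n.+1 + k2.2)%N%:Z - 1) = (n + k2.2)%N%:Z.
    by rewrite addSn -addn1 PoszD addrK.
  rewrite addSn subn1 /= eqz_nat andbC.
  by case: ifP.
move=> k /andP [_]; rewrite mem_iota => /andP [hk2 hk3].
case: ifP => // /andP [/eqP hb /eqP ha].
have hkk : (k <= (i1, n.+1).2 + k2.2)%N.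
  by rewrite /= addSn; move: hk3; rewrite add2n ltnS => /leq_trans; apply; apply: leq_addr.
have := W_kterm (i1, n.+1) k2 k hkk; rewrite /= ha hb => hW.
exfalso; move: hw; rewrite hW.
set w := wk _ + wk _; set c := (rho + sigma)%:~R.
have hc : 0 < c :> rat by rewrite ltr0z.
have hk : 2%:R <= k%:R :> rat by rewrite ler_nat.
move=> h.
have : (k%:R - 1) * c <= 0 :> rat by lra.
rewrite pmulr_lle0 //; lra.
Qed.

Lemma Hp_W k1 k2 a b : Hp (pt k1) (pt k2) a b != 0 ->
  W a b = wk k1 + wk k2 - (rho + sigma)%:~R.
Proof.
rewrite /Hp /=; case: ifP; last by rewrite eqxx.
move=> /andP [/eqP ha /eqP hb] _.
have hb' : (b%:R : rat) = (k1.2 + k2.2)%:R - 1.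
  have -> : (b%:R : rat) = (b%:Z)%:~R by [].
  by rewrite -hb intrB.
rewrite /W /wk /wt -ha hb' natrD intrD; ring.
Qed.

Lemma G0C k1 k2 a b : G0 k1 k2 a b = G0 k2 k1 a b.
Proof. by rewrite /G0 addnC addrC. Qed.

Lemma comm_top (P Q : Welt K) (VP VQ : rat) a b :
  0 < rho + sigma ->
  (forall k, Wcoef P k.1 k.2 != 0 -> wk k <= VP) ->
  (forall k, Wcoef Q k.1 k.2 != 0 -> wk k <= VQ) ->
  VP + VQ - (rho + sigma)%:~R <= W a b ->
  Wcoefr l (Wcomm l P Q) a b =
  \sum_(k1 <- KS P) Wcoef P k1.1 k1.2 * \sum_(k2 <- KS Q) Wcoef Q k2.1 k2.2 *
     (Hp (pt k1) (pt k2) a b - Hp (pt k2) (pt k1) a b).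
Proof.
move=> hpos hP hQ hW.
rewrite Wcoefr_comm !Wcoefr_Wmul.
under eq_bigr => k1 _ do rewrite big_distrr /=.
under [X in _ - X]eq_bigr => k2 _ do rewrite big_distrr /=.
rewrite [X in _ - X]exchange_big /= -sumrB; apply: eq_bigr => k1 _.
rewrite big_distrr -sumrB /=; apply: eq_bigr => k2 _.
have [c1|c1] := eqVneq (Wcoef P k1.1 k1.2) 0; first by rewrite c1 !mul0r mulr0 subrr.
have [c2|c2] := eqVneq (Wcoef Q k2.1 k2.2) 0; first by rewrite c2 !mul0r mulr0 subrr.
have h1 := hP _ c1; have h2 := hQ _ c2.
rewrite (Gm_split k1 k2) //; last by lra.
rewrite (Gm_split k2 k1) //; last by lra.
rewrite G0C; ring.
Qed.

Lemma Wcoef_has (P : Welt K) k : Wcoef P k.1 k.2 != 0 -> exists2 m, m \in P & m.2 = k.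
Proof.
move/sum_nz_has/hasP => [m mP /eqP hm]; exists m => //.
by rewrite hm -surjective_pairing.
Qed.

Lemma vW_ub (P : Welt K) k : Wcoef P k.1 k.2 != 0 -> wk k <= vW l rho sigma P.
Proof.
move=> hk; have [m mP hm] := Wcoef_has P k hk.
rewrite /vW; set s := [seq _ | _ <- _].
have ins : wk k \in s.
  rewrite /s; apply/mapP; exists m; last by rewrite /wk hm.
  by rewrite mem_filter hm hk.
by case: s ins => [//|w s'] ins; apply: foldr_max_ub.
Qed.

Lemma vW_att (P : Welt K) : Wnz P ->
  exists k, Wcoef P k.1 k.2 != 0 /\ wk k = vW l rho sigma P.
Proof.
move=> /hasP [m mP hm].
pose s := [seq wt l rho sigma m.2.1 m.2.2 | m <- P & Wcoef P m.2.1 m.2.2 != 0].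
have -> : vW l rho sigma P = match s with [::] => 0 | w :: s' => foldr Num.max w s' end by [].
have ins : wt l rho sigma m.2.1 m.2.2 \in s by apply: map_f; rewrite mem_filter hm.
have mem : forall w s', s = w :: s' -> foldr Num.max w s' \in s.
  by move=> w s' ->; apply: foldr_max_mem.
case E: s ins mem => [//|w s'] _ mem.
have := mem w s' erefl; rewrite -E /s => /mapP [m'].
by rewrite mem_filter => /andP [hm' _] ->; exists m'.2.
Qed.

Lemma div_l_inj (i j : int) : (i%:~R / l%:R == j%:~R / l%:R :> rat) = (i == j).
Proof.
apply/eqP/eqP => [h|->] //.
have : (i%:~R : rat) = j%:~R.
  by rewrite -(divfK l_nz (i%:~R)) h divfK // l_nz.
by move/eqP; rewrite eqr_int => /eqP.
Qed.

Lemma pt_inj : injective pt.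
Proof.
move=> [i1 j1] [i2 j2] [/eqP h1 h2]; move: h1; rewrite div_l_inj => /eqP ->.
by rewrite h2.
Qed.

Lemma Wcoefr_pt (P : Welt K) k : Wcoefr l P (pt k).1 (pt k).2 = Wcoef P k.1 k.2.
Proof.
rewrite /Wcoefr /Wcoef; apply: eq_bigl => m /=.
rewrite div_l_inj; case: m => c [i j] /=; case: k => i' j' /=.
by rewrite xpair_eqE andbC.
Qed.

Lemma ellW_pt (P : Welt K) k : ellW l rho sigma P (pt k).1 (pt k).2 =
  if wk k == vW l rho sigma P then Wcoef P k.1 k.2 else 0.
Proof. by rewrite /ellW Wcoefr_pt. Qed.

Lemma count_pt (P : Welt K) (x : rat) (y : nat) (G : rat * nat -> K) :
  Wcoefr l P x y != 0 ->
  \sum_(k <- KS P) monoL K x y%:Z (pt k).1 (pt k).2 * G (pt k) = G (x, y).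
Proof.
move/sum_nz_has/hasP => [m mP /andP [/eqP hy /eqP hx]].
have ptm : pt m.2 = (x, y) by rewrite /pt hx hy.
have mK : m.2 \in KS P by rewrite mem_undup; apply: map_f.
rewrite (bigD1_seq m.2) ?undup_uniq //= ptm /monoL /= hx hy !eqxx /= mul1r.
rewrite big1 ?addr0 // => k hk.
case: ifP; rewrite ?mul0r // => /andP [/eqP e1 e2].
move: e2; rewrite eqz_nat => /eqP e2.
have : pt k = pt m.2 by rewrite ptm /pt e1 e2.
by move/pt_inj/eqP; rewrite (negbTE hk).
Qed.

Lemma ell_at (P : Welt K) (n : nat) (lam : nat -> K) (ex : nat -> rat) (s : nat) :
  (forall a b, ellW l rho sigma P a b =
     \sum_(i < n) lam i * monoL K (ex i) (s + i)%N%:Z a b) ->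
  forall i : 'I_n, ellW l rho sigma P (ex i) (s + i) = lam i.
Proof.
move=> hell i.
rewrite hell (bigD1 i) //= /monoL !eqxx /= mulr1 big1 ?addr0 // => j hj.
rewrite eqz_nat eqn_add2l; case: ifP; rewrite ?mulr0 // => /andP [_ /eqP e].
by exfalso; move: hj; rewrite -val_eqE /= e eqxx.
Qed.

Lemma ellW_nz_W (P : Welt K) a b : ellW l rho sigma P a b != 0 ->
  W a b = vW l rho sigma P.
Proof. by rewrite /ellW /W; case: ifP => [/eqP //|_]; rewrite eqxx. Qed.

Lemma collapse (P : Welt K) (n : nat) (lam : nat -> K) (ex : nat -> rat) (s : nat) :
  (forall a b, ellW l rho sigma P a b =
     \sum_(i < n) lam i * monoL K (ex i) (s + i)%N%:Z a b) ->
  forall G : rat * nat -> K,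
  \sum_(k <- KS P) ellW l rho sigma P (pt k).1 (pt k).2 * G (pt k) =
  \sum_(i < n) lam i * G (ex i, (s + i)%N).
Proof.
move=> hell G.
under eq_bigr => k _ do rewrite hell big_distrl /=.
rewrite exchange_big /=; apply: eq_bigr => i _.
have [->|li] := eqVneq (lam i) 0.
  by rewrite mul0r big1 // => k _; rewrite mul0r mul0r.
rewrite -(count_pt P (ex i) (s + i)%N G).
  by rewrite big_distrr /=; apply: eq_bigr => k _; rewrite mulrA.
have : ellW l rho sigma P (ex i) (s + i) = lam i.
  rewrite hell (bigD1 i) //= /monoL !eqxx /= mulr1 big1 ?addr0 // => j hj.
  rewrite eqz_nat eqn_add2l; case: ifP; rewrite ?mulr0 // => /andP [_ /eqP e].
  by exfalso; move: hj; rewrite -val_eqE /= e eqxx.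
by rewrite /ellW; case: ifP => _ h; [rewrite h | move: li; rewrite -h eqxx].
Qed.

Lemma Hp_zero k1 k2 a b : wk k1 + wk k2 - (rho + sigma)%:~R < W a b ->
  Hp (pt k1) (pt k2) a b = 0.
Proof. by move=> h; apply/eqP; apply: contraTT h => /Hp_W ->; rewrite ltxx. Qed.

Lemma Xp_zero k1 k2 a b : wk k1 + wk k2 - (rho + sigma)%:~R < W a b ->
  Hp (pt k1) (pt k2) a b - Hp (pt k2) (pt k1) a b = 0.
Proof.
move=> h; rewrite (Hp_zero k1 k2) // (Hp_zero k2 k1) ?subrr //.
by rewrite [wk k2 + _]addrC.
Qed.

Lemma F1 (P Q : Welt K) a b : 0 < rho + sigma ->
  vW l rho sigma P + vW l rho sigma Q - (rho + sigma)%:~R < W a b ->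
  Wcoefr l (Wcomm l P Q) a b = 0.
Proof.
move=> hpos hW.
rewrite (comm_top P Q (vW l rho sigma P) (vW l rho sigma Q) a b hpos (vW_ub P) (vW_ub Q));
  last by apply: ltW.
rewrite big1 // => k1 _.
have [->|c1] := eqVneq (Wcoef P k1.1 k1.2) 0; first by rewrite mul0r.
rewrite big1 ?mulr0 // => k2 _.
have [->|c2] := eqVneq (Wcoef Q k2.1 k2.2) 0; first by rewrite mul0r.
have h1 := vW_ub P k1 c1; have h2 := vW_ub Q k2 c2.
by rewrite Xp_zero ?mulr0 //; lra.
Qed.

Lemma F2 (P Q : Welt K) a b : 0 < rho + sigma ->
  vW l rho sigma P + vW l rho sigma Q - (rho + sigma)%:~R = W a b ->
  Wcoefr l (Wcomm l P Q) a b =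
  \sum_(k1 <- KS P) ellW l rho sigma P (pt k1).1 (pt k1).2 *
   \sum_(k2 <- KS Q) ellW l rho sigma Q (pt k2).1 (pt k2).2 *
     (Hp (pt k1) (pt k2) a b - Hp (pt k2) (pt k1) a b).
Proof.
move=> hpos hW.
rewrite (comm_top P Q (vW l rho sigma P) (vW l rho sigma Q) a b hpos (vW_ub P) (vW_ub Q));
  last by rewrite hW.
apply: eq_bigr => k1 _; rewrite ellW_pt.
have [c1|c1] := eqVneq (Wcoef P k1.1 k1.2) 0; first by rewrite c1; case: ifP; rewrite !mul0r.
have h1 := vW_ub P k1 c1.
case: eqP => e1; last first.
  rewrite mul0r big1 ?mulr0 // => k2 _.
  have [->|c2] := eqVneq (Wcoef Q k2.1 k2.2) 0; first by rewrite mul0r.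
  have h2 := vW_ub Q k2 c2.
  have h1' : wk k1 < vW l rho sigma P by rewrite lt_neqAle h1 andbT; apply/eqP.
  by rewrite Xp_zero ?mulr0 //; lra.
congr (_ * _); apply: eq_bigr => k2 _; rewrite ellW_pt.
have [c2|c2] := eqVneq (Wcoef Q k2.1 k2.2) 0; first by rewrite c2; case: ifP; rewrite !mul0r.
have h2 := vW_ub Q k2 c2.
case: eqP => e2 //.
have h2' : wk k2 < vW l rho sigma Q by rewrite lt_neqAle h2 andbT; apply/eqP.
by rewrite Xp_zero ?mulr0 ?mul0r //; lra.
Qed.

Lemma Xp_val (hK : [pchar K] =i pred0) (p q : rat * nat) (E : rat) (B : int) a b :
  p.1 + q.1 - 1 = E -> (p.2 + q.2)%N%:Z - 1 = B ->
  Hp p q a b - Hp q p a b =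
  ratr (cross (q.1, q.2%:R) (p.1, p.2%:R)) * monoL K E B a b.
Proof.
move=> hE hB; rewrite /Hp [q.1 + _]addrC [(q.2 + _)%N]addnC hE hB /monoL.
rewrite [E == a]eq_sym [B == b%:Z]eq_sym.
case: ifP => _; last by rewrite subrr mulr0.
rewrite mulr1 /cross /= ratrKB // !ratrKM // !ratr_nat; ring.
Qed.

Lemma F2' (hK : [pchar K] =i pred0) (hpos : 0 < rho + sigma)
  (P Q : Welt K) (r u : int) (s v alpha beta : nat) (lam mu : nat -> K)
  (hellP : forall (a : rat) (b : nat), ellW l rho sigma P a b =
     \sum_(i < alpha.+1) lam i *
        monoL K (r%:~R / l%:R - i%:R * sigma%:~R / rho%:~R) (s + i)%N%:Z a b)
  (hellQ : forall (a : rat) (b : nat), ellW l rho sigma Q a b =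
     \sum_(j < beta.+1) mu j *
        monoL K (u%:~R / l%:R - j%:R * sigma%:~R / rho%:~R) (v + j)%N%:Z a b)
  a b :
  vW l rho sigma P + vW l rho sigma Q - (rho + sigma)%:~R = W a b ->
  Wcoefr l (Wcomm l P Q) a b =
    \sum_(i < alpha.+1) \sum_(j < beta.+1)
      lam i * mu j *
      ratr (cross (u%:~R / l%:R - j%:R * sigma%:~R / rho%:~R, (v + j)%:R)
                  (r%:~R / l%:R - i%:R * sigma%:~R / rho%:~R, (s + i)%:R)) *
      monoL K ((r + u)%:~R / l%:R - (i + j)%:R * sigma%:~R / rho%:~R - 1)
              ((s + v + i + j)%N%:Z - 1) a b.
Proof.
move=> hW; rewrite F2 //.
pose ex := fun i : nat => (r%:~R / l%:R - i%:R * sigma%:~R / rho%:~R : rat).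
pose fy := fun j : nat => (u%:~R / l%:R - j%:R * sigma%:~R / rho%:~R : rat).
have := collapse P alpha.+1 lam ex s hellP
  (fun p => \sum_(k2 <- KS Q) ellW l rho sigma Q (pt k2).1 (pt k2).2 *
     (Hp p (pt k2) a b - Hp (pt k2) p a b)).
move=> /= ->; apply: eq_bigr => i _.
have := collapse Q beta.+1 mu fy v hellQ
  (fun q => Hp (ex i, (s + i)%N) q a b - Hp q (ex i, (s + i)%N) a b).
move=> /= ->; rewrite big_distrr /=; apply: eq_bigr => j _.
rewrite (Xp_val hK (ex i, (s + i)%N) (fy j, (v + j)%N)
   ((r + u)%:~R / l%:R - (i + j)%:R * sigma%:~R / rho%:~R - 1)
   ((s + v + i + j)%N%:Z - 1) a b).
- by rewrite /ex /fy !mulrA.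
- rewrite /ex /fy /= intrD natrD.
  have := l_nz; move: (l%:R : rat) => L hL; ring.
- by rewrite /= addnA [(s + i + v)%N]addnAC.
Qed.

Lemma F3 (hrho : (rho%:~R : rat) != 0)
  (r u : int) (s v alpha beta : nat) (lam mu : nat -> K) a b :
  W a b != rho%:~R * (r%:~R / l%:R) + sigma%:~R * s%:R +
           (rho%:~R * (u%:~R / l%:R) + sigma%:~R * v%:R) - (rho + sigma)%:~R ->
    \sum_(i < alpha.+1) \sum_(j < beta.+1)
      lam i * mu j *
      ratr (cross (u%:~R / l%:R - j%:R * sigma%:~R / rho%:~R, (v + j)%:R)
                  (r%:~R / l%:R - i%:R * sigma%:~R / rho%:~R, (s + i)%:R)) *
      monoL K ((r + u)%:~R / l%:R - (i + j)%:R * sigma%:~R / rho%:~R - 1)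
              ((s + v + i + j)%N%:Z - 1) a b = 0.
Proof.
move=> hW; apply: big1 => i _; apply: big1 => j _.
rewrite /monoL; case: ifP => [/andP [/eqP ha /eqP hb]|_]; last by rewrite mulr0.
exfalso; move/negP: hW; apply; apply/eqP.
have hb' : (b%:R : rat) = (s + v + i + j)%:R - 1.
  have -> : (b%:R : rat) = (b%:Z)%:~R by [].
  by rewrite hb intrB.
rewrite /W ha hb' !natrD !intrD.
have := l_nz; move: (l%:R : rat) => L hL.
move: hrho; move: (rho%:~R : rat) => Rh hRh.
field; by apply/andP.
Qed.

Lemma main_sec (hK : [pchar K] =i pred0) (hpos : 0 < rho + sigma) (hsig : sigma <= 0)
  (P Q : Welt K) (r u : int) (s v alpha beta : nat) (lam mu : nat -> K)
  (hl0 : lam 0%N != 0) (hm0 : mu 0%N != 0)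
  (hellP : forall (a : rat) (b : nat), ellW l rho sigma P a b =
     \sum_(i < alpha.+1) lam i *
        monoL K (r%:~R / l%:R - i%:R * sigma%:~R / rho%:~R) (s + i)%N%:Z a b)
  (hellQ : forall (a : rat) (b : nat), ellW l rho sigma Q a b =
     \sum_(j < beta.+1) mu j *
        monoL K (u%:~R / l%:R - j%:R * sigma%:~R / rho%:~R) (v + j)%N%:Z a b) :
  forall (a : rat) (b : nat),
    Wbr l rho sigma P Q a b =
    \sum_(i < alpha.+1) \sum_(j < beta.+1)
      lam i * mu j *
      ratr (cross (u%:~R / l%:R - j%:R * sigma%:~R / rho%:~R, (v + j)%:R)
                  (r%:~R / l%:R - i%:R * sigma%:~R / rho%:~R, (s + i)%:R)) *
      monoL K ((r + u)%:~R / l%:R - (i + j)%:R * sigma%:~R / rho%:~R - 1)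
              ((s + v + i + j)%N%:Z - 1) a b.
Proof.
have hrho0 : 0 < rho by lra.
have hrho : (rho%:~R : rat) != 0 by rewrite intr_eq0; apply/eqP => e; move: hrho0; rewrite e ltxx.
have hVP : vW l rho sigma P = rho%:~R * (r%:~R / l%:R) + sigma%:~R * s%:R.
  pose ex := fun i : nat => (r%:~R / l%:R - i%:R * sigma%:~R / rho%:~R : rat).
  have e := ell_at P alpha.+1 lam ex s hellP ord0.
  have := ellW_nz_W P (ex 0%N) (s + 0); rewrite e => /(_ hl0) <-.
  by rewrite /W /ex /= addn0 mul0r mul0r subr0.
have hVQ : vW l rho sigma Q = rho%:~R * (u%:~R / l%:R) + sigma%:~R * v%:R.
  pose ex := fun i : nat => (u%:~R / l%:R - i%:R * sigma%:~R / rho%:~R : rat).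
  have e := ell_at Q beta.+1 mu ex v hellQ ord0.
  have := ellW_nz_W Q (ex 0%N) (v + 0); rewrite e => /(_ hm0) <-.
  by rewrite /W /ex /= addn0 mul0r mul0r subr0.
set T := vW l rho sigma P + vW l rho sigma Q - (rho + sigma)%:~R.
have hF3 := F3 hrho r u s v alpha beta lam mu.
rewrite -hVP -hVQ -/T in hF3.
have hF2 := F2' hK hpos P Q r u s v alpha beta lam mu hellP hellQ.
set C := Wcomm l P Q.
move=> a b; rewrite /Wbr -/C -/T.
case: ifP => [/andP [hnz hle] | hcond].
  have [k [ck wkv]] := vW_att C hnz.
  have hvT : vW l rho sigma C = T.
    apply/eqP; rewrite eq_le hle andbT; rewrite leNgt; apply/negP => hlt.
    have := F1 P Q (pt k).1 (pt k).2 hpos; rewrite -/C -/T /W /= -/(wt l rho sigma k.1 k.2).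
    rewrite -/(wk k) wkv => /(_ hlt); rewrite Wcoefr_pt => /eqP; by rewrite (negbTE ck).
  rewrite /ellW hvT; case: eqP => hw.
    by rewrite hF2.
  by rewrite hF3 //; apply/eqP.
have [hw|hw] := eqVneq (W a b) T; last by rewrite hF3.
rewrite -hF2 //; apply/eqP; rewrite eq_sym; apply: contraFT hcond => hnz.
move: (hnz); rewrite /Wcoefr => /sum_nz_has /hasP [m mC /andP [/eqP hy /eqP hx]].
have ptm : pt m.2 = (a, b) by rewrite /pt hx hy.
have cm : Wcoef C m.2.1 m.2.2 != 0 by rewrite -Wcoefr_pt ptm.
have -> : Wnz C by apply/hasP; exists m.
rewrite /=; have := vW_ub C m.2 cm.
have -> : wk m.2 = W a b by rewrite /wk /wt /W -hx -hy.
by rewrite hw.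
Qed.
End Main.

Theorem proposition2p5 (K : fieldType) (hK : [pchar K] =i pred0)
  (l : nat) (hl : (0 < l)%N)
  (rho sigma : int) (hgcd : gcdz rho sigma = 1) (hpos : 0 < rho + sigma)
  (hsig : sigma <= 0)
  (P Q : Welt K) (hP : Wnz P) (hQ : Wnz Q)
  (r u : int) (s v alpha beta : nat) (lam mu : nat -> K)
  (hl0 : lam 0%N != 0) (hla : lam alpha != 0)
  (hm0 : mu 0%N != 0) (hmb : mu beta != 0)
  (hellP : forall (a : rat) (b : nat), ellW l rho sigma P a b =
     \sum_(i < alpha.+1) lam i *
        monoL K (r%:~R / l%:R - i%:R * sigma%:~R / rho%:~R) (s + i)%N%:Z a b)
  (hellQ : forall (a : rat) (b : nat), ellW l rho sigma Q a b =
     \sum_(j < beta.+1) mu j *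
        monoL K (u%:~R / l%:R - j%:R * sigma%:~R / rho%:~R) (v + j)%N%:Z a b) :
  forall (a : rat) (b : nat),
    Wbr l rho sigma P Q a b =
    \sum_(i < alpha.+1) \sum_(j < beta.+1)
      lam i * mu j *
      ratr (cross (u%:~R / l%:R - j%:R * sigma%:~R / rho%:~R, (v + j)%:R)
                  (r%:~R / l%:R - i%:R * sigma%:~R / rho%:~R, (s + i)%:R)) *
      monoL K ((r + u)%:~R / l%:R - (i + j)%:R * sigma%:~R / rho%:~R - 1)
              ((s + v + i + j)%N%:Z - 1) a b.
Proof.
exact: (@main_sec K l rho sigma hl hK hpos hsig P Q r u s v alpha beta lam mu hl0 hm0 hellP hellQ).
Qed.
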